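(* Fix a sample size $n\ge 2$, a bag size $m\ge1$ (with $m\le n-1$ in the subbagging case), and $\varepsilon>0$. For any (deterministic, measurable) base learning algorithm $\mathcal{A}$ with outputs in $\Delta_{L-1}$, the classification algorithm $\mathcal{C}=\mathrm{argmax}^\varepsilon\circ\widetilde{\mathcal{A}}_m$, i.e. $\mathcal{C}(\mathcal{D},x)=\mathrm{argmax}^\varepsilon\big(\widetilde{\mathcal{A}}_m(\mathcal{D})(x)\big)$, has selection stability $\delta$ at sample size $n$, where $$\delta=\varepsilon^{-2}\cdot\frac{1-1/L}{n-1}\cdot\frac{p_{n,m}}{1-p_{n,m}},$$ with $p_{n,m}=1-(1-1/n)^m$ for bootstrapping and $p_{n,m}=m/n$ for subbagging.
   Context: Feature space $\mathcal{X}$, labels $[L]=\{1,\dots,L\}$, simplex $\Delta_{L-1}=\{w\in\mathbb{R}^L:w_i\ge0,\sum_iw_i=1\}$, $\|\cdot\|$ Euclidean norm. A learning algorithm $\mathcal{A}$ maps any data set $\mathcal{D}\in\bigcup_{n\ge0}(\mathcal{X}\times[L])^n$ to a function $\mathcal{A}(\mathcal{D}):\mathcal{X}\to\Delta_{L-1}$. For a data set $\mathcal{D}=((X_i,Y_i))_{i\in[N]}$ of size $N$ and a sequence $r=(i_1,\dots,i_m)\in[N]^m$, $\mathcal{D}^r=((X_{i_1},Y_{i_1}),\dots,(X_{i_m},Y_{i_m}))$. The bagged algorithm is $\widetilde{\mathcal{A}}_m(\mathcal{D})(x)=\mathbb{E}_r[\mathcal{A}(\mathcal{D}^r)(x)]$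 (exact expectation), where for bootstrapping $r$ consists of $m$ indices drawn uniformly with replacement from $[N]$, and for subbagging $r$ consists of $m\le N$ indices drawn uniformly without replacement from $[N]$. Inflated argmax: for $j\in[L]$ let $R_j^\varepsilon=\{w\in\mathbb{R}^L: w_j\ge\max_{\ell\neq j}w_\ell+\varepsilon/\sqrt2\}$ and $\mathrm{argmax}^\varepsilon(w)=\{j\in[L]:\mathrm{dist}(w,R_j^\varepsilon)<\varepsilon\}$, with $\mathrm{dist}(w,R)=\inf_{v\in R}\|w-v\|$. For $\mathcal{D}=((X_j,Y_j))_{j\in[n]}$, $\mathcal{D}^{\setminus i}$ is $\mathcal{D}$ with the $i$th point removed. A classification algorithm $\mathcal{C}$ (mapping $(\mathcal{D},x)$ to a subset of $[L]$) has selection stability $\delta$ at sample size $n$ if for all $\mathcal{D}\in(\mathcal{X}\times[L])^n$ and all $x\in\mathcal{X}$, $\frac1n\sum_{i=1}^n\mathbf{1}\{\mathcal{C}(\mathcal{D},x)\cap\mathcal{C}(\mathcal{D}^{\setminus i},x)=\varnothing\}\le\delta$. *)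

(* Defs.v *)
From HB Require Import structures.
From mathcomp Require Import all_boot all_order all_algebra.
From mathcomp Require Import boolp classical_sets reals.
Set Implicit Arguments. Unset Strict Implicit. Unset Printing Implicit Defensive.
Import Order.TTheory GRing.Theory Num.Theory.
Local Open Scope ring_scope.

Section Defs.
Variables (R : realType) (X : Type) (L : nat).

Definition dataset := seq (X * 'I_L).

Definition in_simplex (w : 'I_L -> R) : Prop :=
  (forall i, 0 <= w i) /\ \sum_(i < L) w i = 1.

Definition eucl_dist (w v : 'I_L -> R) : R :=
  Num.sqrt (\sum_(i < L) (w i - v i) ^+ 2).

Definition Rreg (eps : R) (j : 'I_L) : set ('I_L -> R) :=
  [set v | forall l : 'I_L, l != j -> v l + eps / Num.sqrt 2 <= v j].

Definition dist_set (w : 'I_L -> R) (S : set ('I_L -> R)) : R :=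
  inf [set d | exists2 v, S v & d = eucl_dist w v].

Definition argmax_eps (eps : R) (w : 'I_L -> R) : set 'I_L :=
  [set j | dist_set w (Rreg eps j) < eps].

Definition subsample (D : dataset) (m : nat) (r : 'I_m -> 'I_(size D)) : dataset :=
  [seq tnth (in_tuple D) (r i) | i <- enum 'I_m].

Inductive bag_scheme := Bootstrap | Subbagging.

(* Bootstrapping: r uniform over all of [N]^m (with replacement);
   Subbagging: r uniform over the injective sequences in [N]^m (without replacement). *)
Definition bagged (s : bag_scheme) (A : dataset -> X -> 'I_L -> R) (m : nat)
  (D : dataset) (x : X) : 'I_L -> R :=
  fun j =>
  match s with
  | Bootstrap =>
      ((size D)%:R ^+ m)^-1 *
        \sum_(r : {ffun 'I_m -> 'I_(size D)}) A (subsample r) x j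
  | Subbagging =>
      (#|[pred r : {ffun 'I_m -> 'I_(size D)} | injectiveb r]|%:R)^-1 *
        \sum_(r : {ffun 'I_m -> 'I_(size D)} | injectiveb r) A (subsample r) x j
  end.

Definition remove_at (D : dataset) (i : nat) : dataset := take i D ++ drop i.+1 D.

Definition selection_stable (C : dataset -> X -> set 'I_L) (delta : R) (n : nat) : Prop :=
  forall D : dataset, size D = n -> forall x : X,
    (n%:R)^-1 *
      #|[set i : 'I_n | `[< ~ exists j, C D x j /\ C (remove_at D i) x j >]]|%:R
      <= delta.

End Defs.

Definition p_nm (R : realType) (s : bag_scheme) (n m : nat) : R :=
  match s with
  | Bootstrap => 1 - (1 - (n%:R)^-1) ^+ m
  | Subbagging => m%:R / n%:R
  end.

(* Main.v *)
Require Import Defs.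
From HB Require Import structures.
From mathcomp Require Import all_boot all_order all_algebra.
From mathcomp Require Import ring lra zify.
Import Order.TTheory GRing.Theory Num.Theory.
Local Open Scope ring_scope.
Set Implicit Arguments. Unset Strict Implicit. Unset Printing Implicit Defensive.

Section Gen.
Variables (R : realFieldType) (T : finType) (Om : pred T) (n : nat) (u : 'I_n -> pred T) (p q : R).

Definition NN : R := \sum_(r | Om r) 1.
Definition ZZ (i : 'I_n) (r : T) : R := (1 - p) - (u i r)%:R.

Hypothesis h1 : forall i, \sum_(r | Om r) (u i r)%:R = (1 - p) * NN.
Hypothesis h2 : forall i k, i != k -> \sum_(r | Om r) (u i r && u k r)%:R = q * NN.

Lemma sum_const (c : R) : \sum_(r | Om r) c = c * NN.
Proof. by rewrite /NN mulr_sumr; apply: eq_bigr => r _; rewrite mulr1. Qed.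

Lemma sumZ i : \sum_(r | Om r) ZZ i r = 0.
Proof. by rewrite /ZZ sumrB sum_const h1 subrr. Qed.

Lemma sumZZ i k : \sum_(r | Om r) ZZ i r * ZZ k r =
  (if i == k then p * (1 - p) else q - (1 - p) ^+ 2) * NN.
Proof.
have e : forall r, ZZ i r * ZZ k r =
   (1 - p) ^+ 2 - (1 - p) * (u i r)%:R - (1 - p) * (u k r)%:R + (u i r && u k r)%:R.
  by move=> r; rewrite /ZZ -mulnb natrM; ring.
under eq_bigr => r _ do rewrite e.
rewrite big_split /= !sumrB sum_const -!mulr_sumr !h1.
case: eqP => [-> | /eqP ne].
  under eq_bigr => r _ do rewrite andbb.
  rewrite h1; ring.
rewrite h2 //; ring.
Qed.

Lemma cov_bound (a : 'I_n -> R) :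
  q - (1 - p) ^+ 2 <= 0 -> 0 <= NN ->
  \sum_(r | Om r) (\sum_i a i * ZZ i r) ^+ 2 <=
  (p * (1 - p) - (q - (1 - p) ^+ 2)) * NN * \sum_i a i ^+ 2.
Proof.
move=> hk hN; set v := p * (1 - p); set k := q - (1 - p) ^+ 2.
have e1 : \sum_(r | Om r) (\sum_i a i * ZZ i r) ^+ 2 =
    \sum_i \sum_l a i * a l * (\sum_(r | Om r) ZZ i r * ZZ l r).
  under eq_bigr => r _ do rewrite expr2 big_distrl /=.
  rewrite exchange_big /=; apply: eq_bigr => i _.
  under eq_bigr => r _ do rewrite mulr_sumr.
  rewrite exchange_big /=; apply: eq_bigr => l _.
  rewrite mulr_sumr; apply: eq_bigr => r _; ring.
rewrite e1.
have e2 : forall i, \sum_l a i * a l * (\sum_(r | Om r) ZZ i r * ZZ l r) =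
    NN * (k * a i * \sum_l a l + (v - k) * a i ^+ 2).
  move=> i; under eq_bigr => l _ do rewrite sumZZ.
  rewrite (bigD1 i) //= eqxx.
  have -> : \sum_(l | l != i) a i * a l * ((if i == l then v else k) * NN) =
            \sum_(l | l != i) k * NN * a i * a l.
    apply: eq_bigr => l hl; rewrite eq_sym (negbTE hl); ring.
  rewrite [\sum_l a l](bigD1 i) //= -!mulr_sumr /v /k; ring.
under eq_bigr => i _ do rewrite e2.
set S := \sum_l a l.
have e3 : \sum_i NN * (k * a i * S + (v - k) * a i ^+ 2) =
    NN * k * S ^+ 2 + (v - k) * NN * \sum_i a i ^+ 2.
  rewrite -mulr_sumr big_split /= -[\sum_i (v - k) * a i ^+ 2]mulr_sumr.
  have -> : \sum_i k * a i * S = k * S * S by rewrite -mulr_suml -mulr_sumr.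
  ring.
rewrite e3.
have h6 : NN * k * S ^+ 2 <= 0.
  apply: mulr_le0_ge0; last exact: sqr_ge0.
  exact: mulr_ge0_le0.
lra.
Qed.


Lemma bessel (Yc : T -> R) (M : R) : 0 < M ->
  (forall a : 'I_n -> R, \sum_(r | Om r) (\sum_i a i * ZZ i r) ^+ 2 <= M * \sum_i a i ^+ 2) ->
  \sum_i (\sum_(r | Om r) Yc r * ZZ i r) ^+ 2 <= M * \sum_(r | Om r) Yc r ^+ 2.
Proof.
move=> hM hcov.
pose e i := \sum_(r | Om r) Yc r * ZZ i r.
pose V r := \sum_i e i * ZZ i r.
pose S := \sum_i e i ^+ 2.
have eS : S = \sum_(r | Om r) Yc r * V r.
  rewrite /S /V; under eq_bigr => i _ do rewrite expr2 {2}/e mulr_sumr.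
  rewrite exchange_big /=; apply: eq_bigr => r _.
  rewrite mulr_sumr; apply: eq_bigr => i _; ring.
have hV : \sum_(r | Om r) V r ^+ 2 <= M * S := hcov e.
have hpt : forall r, 2 * M * (Yc r * V r) <= M ^+ 2 * Yc r ^+ 2 + V r ^+ 2.
  move=> r; have := sqr_ge0 (M * Yc r - V r).
  have -> : (M * Yc r - V r) ^+ 2 = M ^+ 2 * Yc r ^+ 2 + V r ^+ 2 - 2 * M * (Yc r * V r) by ring.
  lra.
have h2M : 2 * M * S <= M ^+ 2 * \sum_(r | Om r) Yc r ^+ 2 + M * S.
  rewrite {1}eS mulr_sumr mulr_sumr.
  apply: le_trans (lerD (lexx _) hV).
  rewrite -big_split /=; apply: ler_sum => r _; exact: hpt.
have hMS : M * S <= M * (M * \sum_(r | Om r) Yc r ^+ 2).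
  have -> : M * (M * \sum_(r | Om r) Yc r ^+ 2) = M ^+ 2 * \sum_(r | Om r) Yc r ^+ 2 by ring.
  lra.
by rewrite -/S (ler_pM2l hM) in hMS.
Qed.

Variable L : nat.
Variable Y : 'I_L -> T -> R.
Definition Ybar (j : 'I_L) : R := NN^-1 * \sum_(r | Om r) Y j r.
Definition Yi (i : 'I_n) (j : 'I_L) : R :=
  ((1 - p) * NN)^-1 * \sum_(r | Om r) (u i r)%:R * Y j r.

Hypothesis hY : forall r, Om r -> (forall j, 0 <= Y j r) /\ \sum_j Y j r = 1.

Lemma var_simplex : 0 < NN -> (0 < L)%N ->
  \sum_j \sum_(r | Om r) (Y j r - Ybar j) ^+ 2 <= NN * (1 - L%:R^-1).
Proof.
move=> hN hL.
have e1 : forall j, \sum_(r | Om r) (Y j r - Ybar j) ^+ 2 =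
    \sum_(r | Om r) Y j r ^+ 2 - NN * Ybar j ^+ 2.
  move=> j.
  have eY : \sum_(r | Om r) Y j r = NN * Ybar j.
    by rewrite /Ybar mulrA mulfV ?mul1r // gt_eqF.
  have -> : \sum_(r | Om r) (Y j r - Ybar j) ^+ 2 =
     \sum_(r | Om r) (Y j r ^+ 2 - 2 * Ybar j * Y j r + Ybar j ^+ 2).
    by apply: eq_bigr => r _; ring.
  rewrite big_split /= sumrB sum_const -mulr_sumr eY; ring.
under eq_bigr => j _ do rewrite e1.
rewrite sumrB exchange_big /= -mulr_sumr.
have hA : \sum_(r | Om r) \sum_j Y j r ^+ 2 <= NN.
  rewrite /NN; apply: ler_sum => r hr; have [h0 hs] := hY hr.
  rewrite -hs; apply: ler_sum => j _.
  have hj1 : Y j r <= 1.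
    by rewrite -hs (bigD1 j) //= lerDl sumr_ge0.
  have := h0 j; rewrite expr2; nra.
have hB1 : \sum_j Ybar j = 1.
  rewrite /Ybar -mulr_sumr exchange_big /=.
  under eq_bigr => r hr do rewrite (proj2 (hY hr)).
  by rewrite -/NN mulVf // gt_eqF.
have hB : L%:R^-1 <= \sum_j Ybar j ^+ 2.
  have hL0 : (L%:R : R) != 0 by rewrite pnatr_eq0 -lt0n.
  have : 0 <= \sum_(j < L) (Ybar j - L%:R^-1) ^+ 2 by apply: sumr_ge0 => j _; exact: sqr_ge0.
  have -> : \sum_(j < L) (Ybar j - L%:R^-1) ^+ 2 =
            \sum_(j < L) (Ybar j ^+ 2 - 2 * L%:R^-1 * Ybar j + L%:R^-1 ^+ 2).
    by apply: eq_bigr => j _; ring.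
  rewrite big_split /= sumrB -mulr_sumr hB1 sumr_const card_ord.
  have -> : L%:R^-1 ^+ 2 *+ L = L%:R^-1 :> R.
    by rewrite -mulr_natr expr2 -mulrA mulVf // mulr1.
  lra.
have : NN * L%:R^-1 <= NN * \sum_j Ybar j ^+ 2 by rewrite ler_pM2l.
lra.
Qed.


Lemma main_gen (Lam : R) : 0 < NN -> (0 < L)%N -> 0 < p -> p < 1 ->
  q - (1 - p) ^+ 2 <= 0 -> p * (1 - p) - (q - (1 - p) ^+ 2) <= Lam ->
  \sum_i \sum_j (Ybar j - Yi i j) ^+ 2 <= Lam * (1 - L%:R^-1) / (1 - p) ^+ 2.
Proof.
move=> hN hL hp0 hp1 hk hLam.
set K := p * (1 - p) - (q - (1 - p) ^+ 2) in hLam *.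
have hpp : 0 < p * (1 - p) by rewrite mulr_gt0 // subr_gt0.
have hK : 0 < K by rewrite /K; lra.
have hM : 0 < K * NN by rewrite mulr_gt0.
have h1p : 0 < 1 - p by rewrite subr_gt0.
set c := ((1 - p) * NN)^-1.
have ediff : forall i j, Ybar j - Yi i j =
    c * \sum_(r | Om r) (Y j r - Ybar j) * ZZ i r.
  move=> i j.
  have -> : \sum_(r | Om r) (Y j r - Ybar j) * ZZ i r =
      \sum_(r | Om r) (1 - p) * Y j r - \sum_(r | Om r) (u i r)%:R * Y j r
      - Ybar j * \sum_(r | Om r) ZZ i r.
    rewrite mulr_sumr -!sumrB; apply: eq_bigr => r _; rewrite /ZZ; ring.
  rewrite sumZ mulr0 subr0 -mulr_sumr.
  have -> : \sum_(r | Om r) Y j r = NN * Ybar j.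
    by rewrite /Ybar mulrA mulfV ?mul1r // gt_eqF.
  rewrite /Yi /c; field.
  by rewrite !gt_eqF.
have hcov : forall a : 'I_n -> R,
    \sum_(r | Om r) (\sum_i a i * ZZ i r) ^+ 2 <= K * NN * \sum_i a i ^+ 2.
  by move=> a; apply: cov_bound => //; exact: ltW.
rewrite exchange_big /=.
have step : forall j, \sum_i (Ybar j - Yi i j) ^+ 2 <=
    c ^+ 2 * (K * NN * \sum_(r | Om r) (Y j r - Ybar j) ^+ 2).
  move=> j; under eq_bigr => i _ do rewrite ediff exprMn.
  rewrite -mulr_sumr ler_wpM2l ?sqr_ge0 //.
  exact: bessel.
apply: le_trans (ler_sum _ (fun j _ => step j)) _.
rewrite -mulr_sumr -mulr_sumr.
have hv := var_simplex hN hL.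
have hc2 : 0 <= c ^+ 2 * (K * NN) by rewrite mulr_ge0 ?sqr_ge0 // ltW.
have hc2' : 0 <= c ^+ 2 by exact: sqr_ge0.
apply: le_trans (ler_wpM2l hc2' (ler_wpM2l (ltW hM) hv)) _.
have -> : c ^+ 2 * (K * NN * (NN * (1 - L%:R^-1))) = K * (1 - L%:R^-1) / (1 - p) ^+ 2.
  rewrite /c; field; by rewrite (gt_eqF h1p) pnatr_eq0 -lt0n hL (gt_eqF hN).
have hL1 : 0 <= 1 - L%:R^-1 :> R.
  by rewrite subr_ge0 invf_le1 ?ltr0n // ler1n.
rewrite -!mulrA; apply: ler_wpM2r => //.
by rewrite mulr_ge0 // invr_ge0 sqr_ge0.
Qed.

End Gen.

Section Count.
Variable R : realFieldType.

Lemma sum1_cardR (T : finType) (P : pred T) :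
  \sum_(r | P r) (1 : R) = #|[set r | P r]|%:R.
Proof. by rewrite -sum1dep_card natr_sum. Qed.

Lemma sum_ind (T : finType) (P Q : pred T) :
  \sum_(r | P r) (Q r)%:R = \sum_(r | P r && Q r) (1 : R).
Proof. by rewrite big_mkcondr /=; apply: eq_bigr => r _; case: (Q r). Qed.

Lemma cnt_all (K m : nat) (b : bool) :
  \sum_(r : {ffun 'I_m -> 'I_K} | b ==> injectiveb r) (1 : R) =
  (if b then (K ^_ m)%N else (K ^ m)%N)%:R.
Proof.
rewrite sum1_cardR; case: b => /=.
  by rewrite card_inj_ffuns !card_ord.
have -> : [set r : {ffun 'I_m -> 'I_K} | true] = setT by apply/setP => r; rewrite !inE.
by rewrite cardsT card_ffun !card_ord.
Qed.

Lemma cnt_avoid2 (K m i k : nat) (b : bool) :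
  (i < K)%N -> (k < K)%N -> i != k ->
  \sum_(r : {ffun 'I_m -> 'I_K} | b ==> injectiveb r)
     ([forall t, (r t : nat) != i] && [forall t, (r t : nat) != k])%:R =
  (if b then ((K - 2) ^_ m)%N else ((K - 2) ^ m)%N)%:R :> R.
Proof.
move=> hi hk hik.
pose Rp := [pred y : 'I_K | ((y : nat) != i) && ((y : nat) != k)].
have hRp : #|Rp| = (K - 2)%N.
  have hc := cardC [pred y : 'I_K | ((y : nat) == i) || ((y : nat) == k)].
  have h2c : #|[pred y : 'I_K | ((y : nat) == i) || ((y : nat) == k)]| = 2%N.
    rewrite (@eq_card _ _ (pred2 (Ordinal hi) (Ordinal hk))); last by move=> y; rewrite !inE.
    rewrite card2; case: eqP => // /(congr1 val) /= h; by rewrite h eqxx in hik.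
  rewrite h2c card_ord in hc.
  have hc' : (#|Rp| + 2)%N = K.
    have e : #|Rp| = #|[predC [pred y : 'I_K | ((y : nat) == i) || ((y : nat) == k)]]|.
      by apply: eq_card => y; rewrite !inE negb_or.
    by rewrite e addnC hc.
  lia.
have ememb : forall r : {ffun 'I_m -> 'I_K},
    ([forall t, (r t : nat) != i] && [forall t, (r t : nat) != k]) = (r \in ffun_on Rp).
  move=> r; apply/andP/ffun_onP.
    by case=> /forallP h1 /forallP h2 t; rewrite inE h1 h2.
  by move=> h; split; apply/forallP => t; have := h t; rewrite inE => /andP [].
rewrite sum_ind sum1_cardR; case: b => /=.
  have := card_inj_ffuns_on 'I_m Rp; rewrite card_ord hRp => <-; congr (_%:R); apply: eq_card => r; by rewrite !in_set ememb andbC.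
have := card_ffun_on 'I_m Rp; rewrite card_ord hRp -cardsE => <-. congr (_%:R); apply: eq_card => r; by rewrite !in_set ememb.
Qed.

End Count.

Section Arith.
Variable R : realFieldType.

Lemma powdiff_le (x y : R) k : 0 <= y -> y <= x ->
  x ^+ k.+1 - y ^+ k.+1 <= k.+1%:R * x ^+ k * (x - y).
Proof.
move=> hy hyx; elim: k => [|k IH]; first by rewrite !expr1 expr0 mulr1 mul1r.
have hx : 0 <= x by apply: le_trans hyx.
have e : x ^+ k.+2 - y ^+ k.+2 = x * (x ^+ k.+1 - y ^+ k.+1) + y ^+ k.+1 * (x - y).
  by rewrite !exprS; ring.
rewrite e.
have h1 : x * (x ^+ k.+1 - y ^+ k.+1) <= x * (k.+1%:R * x ^+ k * (x - y)) by rewrite ler_wpM2l.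
have h2 : y ^+ k.+1 * (x - y) <= x ^+ k.+1 * (x - y).
  by rewrite ler_wpM2r ?subr_ge0 // lerXn2r // ?nnegrE.
have -> : k.+2%:R * x ^+ k.+1 * (x - y) = x * (k.+1%:R * x ^+ k * (x - y)) + x ^+ k.+1 * (x - y).
  by rewrite exprS -natr1 mulrS; ring.
lra.
Qed.

Lemma powdiff_ge (x y : R) k : 0 <= y -> y <= x ->
  k.+1%:R * y ^+ k * (x - y) <= x ^+ k.+1 - y ^+ k.+1.
Proof.
move=> hy hyx; elim: k => [|k IH]; first by rewrite !expr1 expr0 mulr1 mul1r.
have hx : 0 <= x by apply: le_trans hyx.
have e : x ^+ k.+2 - y ^+ k.+2 = x * (x ^+ k.+1 - y ^+ k.+1) + y ^+ k.+1 * (x - y).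
  by rewrite !exprS; ring.
rewrite e.
have h1 : y * (k.+1%:R * y ^+ k * (x - y)) <= x * (x ^+ k.+1 - y ^+ k.+1).
  apply: le_trans (_ : x * (k.+1%:R * y ^+ k * (x - y)) <= _).
    rewrite ler_wpM2r //; apply: mulr_ge0; [apply: mulr_ge0 => //; exact: exprn_ge0 | by rewrite subr_ge0].
  by rewrite ler_wpM2l.
have -> : k.+2%:R * y ^+ k.+1 * (x - y) = y * (k.+1%:R * y ^+ k * (x - y)) + y ^+ k.+1 * (x - y).
  by rewrite exprS -natr1 mulrS; ring.
lra.
Qed.

End Arith.

Section Boot.
Variable R : realFieldType.
Variables (n k : nat).
Hypothesis hn : (2 <= n)%N.
Let nr : R := n%:R.
Let a : R := 1 - nr^-1.
Let bb : R := ((n - 2)%N)%:R / nr.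

Lemma nr_gt1 : 1 < nr.
Proof. by rewrite /nr ltr1n. Qed.

Lemma bb_eq : bb = 1 - 2 / nr.
Proof.
have h := nr_gt1; rewrite /bb natrB // -/nr; field; rewrite gt_eqF //; lra.
Qed.

Lemma a2_bb : a ^+ 2 - bb = nr^-2.
Proof. have h := nr_gt1; rewrite bb_eq /a; field; rewrite gt_eqF //; lra. Qed.

Lemma bb_ge0 : 0 <= bb.
Proof. by rewrite /bb divr_ge0 // /nr ler0n. Qed.

Lemma bb_le : bb <= a ^+ 2.
Proof.
have := a2_bb; have : 0 <= nr^-2 by rewrite invr_ge0 exprn_ge0 // ltW // (lt_trans ltr01 nr_gt1).
lra.
Qed.

Lemma a_ge0 : 0 <= a.
Proof.
have h := nr_gt1; rewrite /a subr_ge0 invf_le1; [exact: ltW | lra].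
Qed.

Lemma a_lt1 : a < 1.
Proof.
have h := nr_gt1; rewrite /a; have : 0 < nr^-1 by rewrite invr_gt0; lra.
lra.
Qed.

Lemma boot_kappa : bb ^+ k.+1 - (a ^+ k.+1) ^+ 2 <= 0.
Proof.
rewrite -exprM mulnC exprM subr_le0 lerXn2r ?nnegrE ?bb_ge0 ?exprn_ge0 ?a_ge0 //.
exact: bb_le.
Qed.

Lemma boot_lam (p : R) : p = 1 - a ^+ k.+1 ->
  p * (1 - p) - (bb ^+ k.+1 - (1 - p) ^+ 2) <= p * (1 - p) * (nr / (nr - 1)).
Proof.
move=> hp.
have hnr := nr_gt1.
have e1p : 1 - p = a ^+ k.+1 by rewrite hp; ring.
rewrite e1p.
have ha0 := a_ge0; have ha1 := a_lt1.
have hak : 0 <= a ^+ k by exact: exprn_ge0.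
have hak1 : 0 <= a ^+ k.+1 by exact: exprn_ge0.
have H1 : (a ^+ 2) ^+ k.+1 - bb ^+ k.+1 <= k.+1%:R * (a ^+ 2) ^+ k * (a ^+ 2 - bb).
  apply: powdiff_le; [exact: bb_ge0 | exact: bb_le].
have H2 : k.+1%:R * a ^+ k * (1 - a) <= 1 ^+ k.+1 - a ^+ k.+1.
  by apply: powdiff_ge => //; exact: ltW.
rewrite expr1n in H2.
have e1a : 1 - a = nr^-1 by rewrite /a; ring.
rewrite e1a in H2; rewrite a2_bb in H1.
have ea2 : (a ^+ 2) ^+ k.+1 = (a ^+ k.+1) ^+ 2 by rewrite -!exprM mulnC.
rewrite ea2 in H1.
have ek : k.+1%:R * (a ^+ 2) ^+ k * nr^-2 =
    (k.+1%:R * a ^+ k * nr^-1) * a ^+ k.+1 / (nr - 1).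
  have -> : (a ^+ 2) ^+ k = a ^+ k * a ^+ k by rewrite -!exprM mulnC exprM expr2.
  rewrite [a ^+ k.+1]exprS; move: (a ^+ k) => A; rewrite /a; field.
  by rewrite !gt_eqF //; lra.
rewrite ek in H1.
have hpos : 0 <= a ^+ k.+1 / (nr - 1) by rewrite divr_ge0 //; lra.
have H3 : (k.+1%:R * a ^+ k * nr^-1) * (a ^+ k.+1 / (nr - 1)) <=
          (1 - a ^+ k.+1) * (a ^+ k.+1 / (nr - 1)).
  by rewrite ler_wpM2r.
have e3 : (1 - a ^+ k.+1) * a ^+ k.+1 * (nr / (nr - 1)) =
   (1 - a ^+ k.+1) * a ^+ k.+1 + (1 - a ^+ k.+1) * (a ^+ k.+1 / (nr - 1)).
  field; rewrite gt_eqF //; lra.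
rewrite hp e3.
lra.
Qed.

End Boot.

Section Sub.
Variable R : realFieldType.
Variables (n m : nat).
Hypothesis hn : (2 <= n)%N.
Hypothesis hm : (m <= n - 1)%N.

Lemma ffact_id1 : (n ^_ m * (n - m) = n * (n - 1) ^_ m)%N.
Proof. by rewrite -ffactnSr ffactnS subn1. Qed.

Lemma ffact_id2 : (n ^_ m * ((n - m) * (n - m.+1)) = n * (n - 1) * (n - 2) ^_ m)%N.
Proof.
rewrite mulnA -ffactnSr -ffactnSr ffactnS ffactnS -mulnA.
by rewrite subn1 subn2.
Qed.

Lemma ffact_pos : (0 < n ^_ m)%N.
Proof. by rewrite ffact_gt0; lia. Qed.

Let nr : R := n%:R.
Let mr : R := m%:R.
Let Nf : R := (n ^_ m)%:R.

Lemma sub_1p : (1 - mr / nr) * Nf = ((n - 1) ^_ m)%:R.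
Proof.
have hnr : 0 < nr by rewrite /nr ltr0n; lia.
have := congr1 (fun k : nat => k%:R : R) ffact_id1 => /=.
rewrite !natrM natrB; last lia.
rewrite -/nr -/mr -/Nf => h.
apply: (mulfI (x := nr)); first by rewrite gt_eqF.
rewrite -h; field; rewrite gt_eqF //.
Qed.

Lemma sub_q : ((n - 2) ^_ m)%:R / Nf = (nr - mr) * (nr - mr - 1) / (nr * (nr - 1)).
Proof.
have hnr : 1 < nr by rewrite /nr ltr1n.
have hN : 0 < Nf by rewrite /Nf ltr0n ffact_pos.
have := congr1 (fun k : nat => k%:R : R) ffact_id2 => /=.
rewrite !natrM !natrB; try lia.
rewrite -[m.+1%:R]natr1 -/nr -/mr -/Nf => h.
apply: (mulfI (x := Nf * (nr * (nr - 1)))).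
  by rewrite mulf_neq0 ?gt_eqF // mulr_gt0 //; lra.
have -> : Nf * (nr * (nr - 1)) * ((nr - mr) * (nr - mr - 1) / (nr * (nr - 1))) =
   Nf * ((nr - mr) * (nr - (mr + 1))).
  field; rewrite !gt_eqF //; lra.
rewrite h; field; rewrite gt_eqF //.
Qed.

End Sub.

From mathcomp Require Import boolp classical_sets reals.
Import Order.TTheory GRing.Theory Num.Theory.
Local Open Scope ring_scope.

Section PartA.
Variables (R : realType) (L : nat) (eps : R).
Hypothesis eps_gt0 : 0 < eps.

Let c : R := eps / Num.sqrt 2.
Definition posr (y : R) : R := Num.max y 0.

Lemma c_gt0 : 0 < c.
Proof. by rewrite /c divr_gt0 // sqrtr_gt0. Qed.

Lemma eps2c : eps ^+ 2 = 2 * c ^+ 2.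
Proof.
rewrite /c expr_div_n sqr_sqrtr ?ler0n // mulrC mulfVK //.
by rewrite pnatr_eq0.
Qed.

Lemma posr_ge0 y : 0 <= posr y.
Proof. by rewrite /posr le_max lexx orbT. Qed.

Lemma posrE y : 0 <= y -> posr y = y.
Proof. by move=> h; rewrite /posr max_l. Qed.

Lemma posr0 y : y <= 0 -> posr y = 0.
Proof. by move=> h; rewrite /posr max_r. Qed.

Lemma dist_le_pt (w z : 'I_L -> R) j :
  Rreg eps j z -> dist_set w (Rreg eps j) <= eucl_dist w z.
Proof.
move=> hz; apply: ge_inf; last by exists z.
by exists 0 => y [v _ ->]; exact: sqrtr_ge0.
Qed.

Lemma in_argmax (w z : 'I_L -> R) j :
  Rreg eps j z -> \sum_l (w l - z l) ^+ 2 < eps ^+ 2 -> argmax_eps eps w j.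
Proof.
move=> hz hS; rewrite /argmax_eps /=.
apply: (le_lt_trans (dist_le_pt w hz)).
rewrite /eucl_dist -(ger0_norm (ltW eps_gt0)) -sqrtr_sqr ltr_sqrt //.
by rewrite exprn_gt0.
Qed.

Lemma notin_argmax (w z : 'I_L -> R) j :
  Rreg eps j z -> ~ argmax_eps eps w j -> eps ^+ 2 <= \sum_l (w l - z l) ^+ 2.
Proof.
move=> hz hn; rewrite leNgt; apply/negP => h; apply: hn.
exact: in_argmax hz h.
Qed.

Definition zp (x : 'I_L -> R) j s : 'I_L -> R :=
  fun l => if l == j then x j + s else (if x l <= x j + s - c then x l else x j + s - c).

Lemma zp_in x j s : Rreg eps j (zp x j s).
Proof.
move=> l lj; rewrite /zp (negbTE lj) eqxx -/c.
by case: ifP => h; lra.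
Qed.

Lemma zp_dist x j s : c <= s ->
  \sum_l (x l - zp x j s l) ^+ 2 = s ^+ 2 + \sum_l (posr (x l - (x j + s - c))) ^+ 2.
Proof.
move=> hs; rewrite (bigD1 j) //= [in RHS](bigD1 j) //= /zp eqxx.
rewrite posr0; last lra.
rewrite expr0n /= add0r; congr (_ + _); first by rewrite -sqrrN; congr (_ ^+ 2); ring.
apply: eq_bigr => l lj; rewrite (negbTE lj).
case: (leP (x l) (x j + s - c)) => h.
  by rewrite subrr posr0 ?expr0n /=; lra.
by rewrite posrE /=; lra.
Qed.

Lemma sumsq_le_sqsum (f : 'I_L -> R) : (forall l, 0 <= f l) ->
  \sum_l f l ^+ 2 <= (\sum_l f l) ^+ 2.
Proof.
move=> h; rewrite expr2 mulr_suml; apply: ler_sum => l _.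
rewrite expr2 ler_wpM2l //.
by rewrite (bigD1 l) //= lerDl sumr_ge0.
Qed.

Lemma sq_le (a b : R) : 0 <= a -> a <= b -> a ^+ 2 <= b ^+ 2.
Proof. by move=> ha hab; rewrite !expr2 ler_pM. Qed.

Lemma core (w v : 'I_L -> R) (al be : R) :
  (forall l, al < w l -> v l <= be) -> be <= al ->
  eps ^+ 2 <= c ^+ 2 + \sum_l (posr (w l - al)) ^+ 2 ->
  eps ^+ 2 <= (c + (al - be)) ^+ 2 + \sum_l (posr (v l - al)) ^+ 2 ->
  eps ^+ 2 <= \sum_l (w l - v l) ^+ 2.
Proof.
move=> H1 hba H3 H4; set g := al - be in H4 *.
have hg : 0 <= g by rewrite subr_ge0.
have hc := c_gt0.
have he := eps2c.
pose A1 := \sum_l posr (w l - al).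
pose A2 := \sum_l (posr (w l - al)) ^+ 2.
pose B2 := \sum_l (posr (v l - al)) ^+ 2.
pose T := \sum_l (if al < w l then g ^+ 2 else 0).
have term : forall l, (posr (w l - al)) ^+ 2 + 2 * g * posr (w l - al)
     + (if al < w l then g ^+ 2 else 0) + (posr (v l - al)) ^+ 2 <= (w l - v l) ^+ 2.
  move=> l; case: ltP => hw.
    have hv := H1 l hw.
    rewrite posrE ?subr_ge0 ?(ltW hw) // posr0 ?expr0n /= ?addr0; last lra.
    have h1 : w l - al + g <= w l - v l by rewrite /g; lra.
    have h2 : 0 <= w l - al + g by lra.
    apply: le_trans (sq_le h2 h1); rewrite le_eqVlt; apply/orP; left; apply/eqP; ring.
  rewrite posr0 ?expr0n /= ?mulr0 ?add0r ?addr0; last lra.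
  case: (leP (v l) al) => hv.
    by rewrite posr0 ?expr0n ?sqr_ge0 //; lra.
  rewrite posrE; last lra.
  rewrite -[(w l - v l) ^+ 2]sqrrN opprB.
  by apply: sq_le; lra.
have hsum : A2 + 2 * g * A1 + T + B2 <= \sum_l (w l - v l) ^+ 2.
  rewrite /A2 /A1 /T /B2 mulr_sumr -!big_split /=.
  by apply: ler_sum => l _; exact: term.
have hA2 : c ^+ 2 <= A2 by rewrite /A2; lra.
have [l0 hl0] : exists l, al < w l.
  apply/not_existsP => hn.
  have : A2 = 0.
    rewrite /A2 big1 // => l _; rewrite posr0 ?expr0n //.
    by move: (hn l); rewrite subr_le0 => /negP; rewrite -leNgt.
  move=> h0; rewrite h0 in hA2; have : 0 < c ^+ 2 by rewrite exprn_gt0.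
  lra.
have hT : g ^+ 2 <= T.
  rewrite /T (bigD1 l0) //= hl0 lerDl sumr_ge0 // => l _.
  by case: ifP => _ //; rewrite sqr_ge0.
have hA1 : c <= A1.
  have h1 : c ^+ 2 <= A1 ^+ 2.
    apply: (le_trans hA2); apply: sumsq_le_sqsum => l; exact: posr_ge0.
  have hA10 : 0 <= A1 by apply: sumr_ge0 => l _; exact: posr_ge0.
  by rewrite leNgt; apply/negP => hlt; nra.
have hgA : g * c <= g * A1 by rewrite ler_wpM2l.
have hexp : (c + g) ^+ 2 = c ^+ 2 + 2 * (g * c) + g ^+ 2 by ring.
have hB : eps ^+ 2 - (c + g) ^+ 2 <= B2 by rewrite /B2; lra.
rewrite hexp in hB.
have e2 : 2 * g * A1 = 2 * (g * A1) by ring.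
rewrite e2 in hsum.
lra.
Qed.


Lemma bad_bound (x : 'I_L -> R) j s : ~ argmax_eps eps x j -> c <= s ->
  eps ^+ 2 <= s ^+ 2 + \sum_l (posr (x l - (x j + s - c))) ^+ 2.
Proof.
move=> hn hs; rewrite -zp_dist //; exact: notin_argmax (@zp_in x j s) hn.
Qed.

Lemma top_good (x : 'I_L -> R) j : (forall l, x l <= x j) -> argmax_eps eps x j.
Proof.
move=> hx; apply: (in_argmax (@zp_in x j c)); rewrite zp_dist //.
rewrite big1 => [|l _]; last by rewrite posr0 ?expr0n //; have := hx l; lra.
rewrite eps2c addr0; have := c_gt0; have : 0 < c ^+ 2 by rewrite exprn_gt0 // c_gt0.
lra.
Qed.

Lemma compat (j00 : 'I_L) (w v : 'I_L -> R) :
  \sum_l (w l - v l) ^+ 2 < eps ^+ 2 ->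
  exists j, argmax_eps eps w j /\ argmax_eps eps v j.
Proof.
move=> hS; have [//|hno] := pselect (exists j, argmax_eps eps w j /\ argmax_eps eps v j).
exfalso.
have H : forall j, argmax_eps eps w j -> ~ argmax_eps eps v j.
  by move=> j hw hv; apply: hno; exists j.
have [[jw hjw] | hnw] := pselect (exists j, ~ argmax_eps eps w j); last first.
  case: (arg_maxP v (isT : predT j00)) => jv _ hmax.
  apply: (H jv); last by apply: top_good => l; exact: hmax.
  by apply: contrapT => h; apply: hnw; exists jv.
have [[jv hjv] | hnv] := pselect (exists j, ~ argmax_eps eps v j); last first.
  case: (arg_maxP w (isT : predT j00)) => jx _ hmax.
  apply: (H jx); first by apply: top_good => l; exact: hmax.
  by apply: contrapT => h; apply: hnv; exists jx.
pose Pw := fun j => ~~ (dist_set w (Rreg eps j) < eps).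
pose Pv := fun j => ~~ (dist_set v (Rreg eps j) < eps).
have Pwjw : Pw jw by apply/negP.
have Pvjv : Pv jv by apply/negP.
case: (arg_maxP w Pwjw) => j0 Pj0 hmax0.
case: (arg_maxP v Pvjv) => j1 Pj1 hmax1.
have bj0 : ~ argmax_eps eps w j0 by apply/negP.
have bj1 : ~ argmax_eps eps v j1 by apply/negP.
have hc := c_gt0.
have Hw : forall l, w j0 < w l -> v l <= v j1.
  move=> l hl; apply: hmax1; apply/negP => hv.
  have hwl : argmax_eps eps w l.
    apply: contrapT => hn; have := hmax0 l (introN idP hn); by rewrite /= leNgt hl.
  exact: (H l hwl hv).
have Hv : forall l, v j1 < v l -> w l <= w j0.
  move=> l hl; apply: hmax0; apply/negP => hw.
  have hvl : argmax_eps eps v l.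
    apply: contrapT => hn; have := hmax1 l (introN idP hn); by rewrite /= leNgt hl.
  exact: (H l hw hvl).
have H3w := bad_bound bj0 (lexx c).
have H3v := bad_bound bj1 (lexx c).
have e1 : w j0 + c - c = w j0 by ring.
have e2 : v j1 + c - c = v j1 by ring.
rewrite e1 in H3w; rewrite e2 in H3v.
case: (leP (v j1) (w j0)) => hab.
  have H4 : eps ^+ 2 <= (c + (w j0 - v j1)) ^+ 2 + \sum_l (posr (v l - w j0)) ^+ 2.
    have := bad_bound (s := c + (w j0 - v j1)) bj1.
    have -> : v j1 + (c + (w j0 - v j1)) - c = w j0 by ring.
    by apply; lra.
  have := core Hw hab H3w H4; lra.
have H4 : eps ^+ 2 <= (c + (v j1 - w j0)) ^+ 2 + \sum_l (posr (w l - v j1)) ^+ 2.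
  have := bad_bound (s := c + (v j1 - w j0)) bj0.
  have -> : w j0 + (c + (v j1 - w j0)) - c = v j1 by ring.
  by apply; lra.
have := core Hv (ltW hab) H3v H4.
have -> : \sum_l (v l - w l) ^+ 2 = \sum_l (w l - v l) ^+ 2.
  by apply: eq_bigr => l _; rewrite -sqrrN opprB.
lra.
Qed.

End PartA.

Section Reindex.
Variables (X : Type) (L m : nat) (D : dataset X L) (i : nat).
Hypothesis hi : (i < size D)%N.
Hypothesis h2 : (1 < size D)%N.

Local Notation N := (size D).
Local Notation D' := (remove_at D i).
Local Notation N' := (size (remove_at D i)).

Lemma size_rm : N' = N.-1.
Proof.
rewrite /remove_at size_cat (size_takel (ltnW hi)) size_drop.
by case: N hi h2 => // k; rewrite ltnS => hk _; rewrite subSS subnKC.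
Qed.

Lemma nth_rm x0 k : (k < N')%N -> nth x0 D' k = nth x0 D (bump i k).
Proof.
move=> hk; rewrite /remove_at nth_cat (size_takel (ltnW hi)).
rewrite /bump; case: (ltnP k i) => hki.
  by rewrite nth_take // leqNgt hki add0n.
rewrite nth_drop add1n; congr nth.
by rewrite addSn subnKC.
Qed.

Lemma bump_lt (k : 'I_N') : (bump i k < N)%N.
Proof.
have hk : (k < N.-1)%N by rewrite -size_rm ltn_ord.
have hb : (bump i k <= k.+1)%N by rewrite /bump; case: (i <= k)%N; lia.
lia.
Qed.

Definition liftI (k : 'I_N') : 'I_N := Ordinal (bump_lt k).

Lemma k0_lt : (0 < N')%N.
Proof. by rewrite size_rm -subn1 subn_gt0. Qed.

Definition k0 : 'I_N' := Ordinal k0_lt.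

Definition unl (y : 'I_N) : 'I_N' := insubd k0 (unbump i y).

Definition gmap (r : {ffun 'I_m -> 'I_N'}) : {ffun 'I_m -> 'I_N} :=
  [ffun t => liftI (r t)].
Definition ginv (r : {ffun 'I_m -> 'I_N}) : {ffun 'I_m -> 'I_N'} :=
  [ffun t => unl (r t)].

Definition uI (r : {ffun 'I_m -> 'I_N}) : bool := [forall t, (r t : nat) != i].

Lemma liftI_inj : injective liftI.
Proof.
move=> a b /(congr1 val) /= h; apply: val_inj => /=.
by rewrite -(bumpK i a) h bumpK.
Qed.

Lemma unlK (y : 'I_N) : (y : nat) != i -> liftI (unl y) = y.
Proof.
move=> hy; apply: val_inj => /=; rewrite /unl val_insubd.
have hlt : (unbump i y < N')%N.
  have hy' := ltn_ord y; rewrite size_rm /unbump.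
  case: (ltnP i y) => hiy /=; lia.
by rewrite hlt unbumpK // inE.
Qed.

Lemma liftK (k : 'I_N') : unl (liftI k) = k.
Proof.
apply: val_inj; rewrite /unl val_insubd /= bumpK.
by rewrite (ltn_ord k).
Qed.

Lemma gmapK r : ginv (gmap r) = r.
Proof. by apply/ffunP => t; rewrite !ffunE liftK. Qed.

Lemma ginvK r : uI r -> gmap (ginv r) = r.
Proof.
move=> /forallP hr; apply/ffunP => t; rewrite !ffunE unlK //; exact: hr.
Qed.

Lemma uI_gmap r : uI (gmap r).
Proof. by apply/forallP => t; rewrite ffunE /= eq_sym neq_bump. Qed.

Lemma inj_gmap r : injectiveb (gmap r) = injectiveb r.
Proof.
apply/injectiveP/injectiveP => h a b hab.
  by apply: h; rewrite !ffunE hab.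
by apply: h; apply: liftI_inj; move: hab; rewrite !ffunE.
Qed.

Lemma subsample_rm (r : {ffun 'I_m -> 'I_N'}) : @subsample X L D' m r = @subsample X L D m (gmap r).
Proof.
rewrite /subsample; apply: eq_map => t; rewrite ffunE.
rewrite (tnth_nth (tnth (in_tuple D) (liftI (r t)))) /= nth_rm //.
by rewrite [RHS](tnth_nth (tnth (in_tuple D) (liftI (r t)))).
Qed.

Lemma reindex_rm (R : realType) (b : bool) (F : {ffun 'I_m -> 'I_N} -> R) :
  \sum_(r : {ffun 'I_m -> 'I_N} | (b ==> injectiveb r) && uI r) F r =
  \sum_(r' : {ffun 'I_m -> 'I_N'} | b ==> injectiveb r') F (gmap r').
Proof.
rewrite (reindex_onto gmap ginv); last by move=> r /andP [_ hu]; exact: ginvK.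
apply: eq_bigl => r; rewrite gmapK eqxx inj_gmap uI_gmap.
by rewrite !andbT.
Qed.

End Reindex.

Definition bsch (s : bag_scheme) : bool := if s is Subbagging then true else false.

Lemma sum_indF (R : realFieldType) (T : finType) (P Q : pred T) (F : T -> R) :
  \sum_(r | P r) (Q r)%:R * F r = \sum_(r | P r && Q r) F r.
Proof. by rewrite big_mkcondr /=; apply: eq_bigr => r _; case: (Q r); rewrite ?mul1r ?mul0r. Qed.

Lemma bagged_avg (R : realType) (X : Type) (L : nat) (s : bag_scheme)
  (A : dataset X L -> X -> 'I_L -> R) (m : nat) (D : dataset X L) (x : X) j :
  bagged s A m D x j =
  (\sum_(r : {ffun 'I_m -> 'I_(size D)} | bsch s ==> injectiveb r) (1 : R))^-1 *
  \sum_(r : {ffun 'I_m -> 'I_(size D)} | bsch s ==> injectiveb r) A (subsample r) x j.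
Proof.
rewrite cnt_all; case: s => /=.
  by rewrite /bagged natrX.
rewrite /bagged; congr (_^-1 * _); congr (_%:R).
have := card_inj_ffuns 'I_m 'I_(size D); rewrite !card_ord => <-.
by apply: eq_card => r; rewrite !inE.
Qed.

Lemma Kb_core (R : realType) (X : Type) (L n m : nat) (s : bag_scheme)
  (A : dataset X L -> X -> 'I_L -> R) (D : dataset X L) (x : X) (p q : R) :
  (2 <= n)%N -> size D = n -> (0 < L)%N -> (forall D x, in_simplex (A D x)) ->
  (0 < (if bsch s then (n ^_ m)%N else (n ^ m)%N))%N ->
  (forall K, K = (n - 1)%N ->
    \sum_(r : {ffun 'I_m -> 'I_K} | bsch s ==> injectiveb r) (1 : R) =
    (1 - p) * (if bsch s then (n ^_ m)%N else (n ^ m)%N)%:R) ->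
  (if bsch s then ((n - 2) ^_ m)%N else ((n - 2) ^ m)%N)%:R =
    q * (if bsch s then (n ^_ m)%N else (n ^ m)%N)%:R ->
  0 < p -> p < 1 -> q - (1 - p) ^+ 2 <= 0 ->
  p * (1 - p) - (q - (1 - p) ^+ 2) <= p * (1 - p) * (n%:R / (n%:R - 1)) ->
  \sum_(i < n) \sum_j (bagged s A m D x j - bagged s A m (remove_at D i) x j) ^+ 2 <=
  p * (1 - p) * (n%:R / (n%:R - 1)) * (1 - L%:R^-1) / (1 - p) ^+ 2.
Proof.
move=> hn hD hL hA hN0 H1 H2 hp0 hp1 hk hlam.
pose T := {ffun 'I_m -> 'I_(size D)}.
pose Om : pred T := fun r => bsch s ==> injectiveb r.
pose u : 'I_n -> pred T := fun i r => @uI X L m D i r.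
pose Y : 'I_L -> T -> R := fun j r => A (subsample r) x j.
have hi : forall i : 'I_n, (i < size D)%N by move=> i; rewrite hD ltn_ord.
have h2 : (1 < size D)%N by rewrite hD.
have eN : NN R Om = (if bsch s then (n ^_ m)%N else (n ^ m)%N)%:R.
  by rewrite /NN /Om cnt_all hD.
have hNpos : 0 < NN R Om.
  by rewrite eN ltr0n.
have eNi : forall i : 'I_n,
    \sum_(r' : {ffun 'I_m -> 'I_(size (remove_at D i))} | bsch s ==> injectiveb r') (1 : R)
    = (1 - p) * NN R Om.
  by move=> i; rewrite eN; apply: H1; rewrite (size_rm (hi i) h2) hD subn1.
have h1 : forall i, \sum_(r | Om r) (u i r)%:R = (1 - p) * NN R Om.
  move=> i; rewrite sum_ind /Om /u.
  rewrite (reindex_rm (hi i) h2 (bsch s) (fun _ => (1 : R))).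
  exact: eNi.
have eq2 : forall i k : 'I_n, i != k ->
    \sum_(r | Om r) (u i r && u k r)%:R = q * NN R Om.
  move=> i k hik; rewrite eN /Om /u /uI (cnt_avoid2 _ _ _ (hi i) (hi k)) // hD.
  by case: (bsch s) H2.
have hY : forall r, Om r -> (forall j, 0 <= Y j r) /\ \sum_j Y j r = 1.
  by move=> r _; have [h0 h1'] := hA (subsample r) x.
have eW : forall j, bagged s A m D x j = Ybar Om Y j by move=> j; rewrite bagged_avg.
have eWi : forall (i : 'I_n) j, bagged s A m (remove_at D i) x j = Yi Om u p Y i j.
  move=> i j; rewrite bagged_avg eNi /Yi sum_indF; congr (_ * _).
  rewrite /Om /u (reindex_rm (hi i) h2 (bsch s) (fun r => Y j r)).
  by apply: eq_bigr => r' _; rewrite /Y subsample_rm.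
under eq_bigr => i _ do under eq_bigr => j _ do rewrite eW eWi.
exact: (@main_gen R T Om n u p q h1 eq2 L Y hY _ hNpos hL hp0 hp1 hk hlam).
Qed.

Lemma Kb (R : realType) (X : Type) (L n m : nat) (s : bag_scheme)
  (A : dataset X L -> X -> 'I_L -> R) (D : dataset X L) (x : X) (p : R) :
  (2 <= n)%N -> (1 <= m)%N -> (s = Subbagging -> (m <= n - 1)%N) ->
  size D = n -> (0 < L)%N -> (forall D x, in_simplex (A D x)) ->
  p = p_nm R s n m ->
  \sum_(i < n) \sum_j (bagged s A m D x j - bagged s A m (remove_at D i) x j) ^+ 2 <=
  p * (1 - p) * (n%:R / (n%:R - 1)) * (1 - L%:R^-1) / (1 - p) ^+ 2.
Proof.
move=> hn hm hsub hD hL hA.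
have hnr : 1 < (n%:R : R) by rewrite ltr1n.
have hn0 : (n%:R : R) != 0 by rewrite gt_eqF //; lra.
case: s hsub => hsub hp /=.
-
  clear hsub; case: m hm hp => // k _ hp.
  pose a : R := 1 - n%:R^-1.
  have ha0 : 0 < a.
    rewrite /a subr_gt0 invf_lt1 //; lra.
  have hinv : 0 < (n%:R : R)^-1 by rewrite invr_gt0; lra.
  have ha1 : a < 1 by rewrite /a; lra.
  have e1p : 1 - p = a ^+ k.+1 by rewrite hp /p_nm /a; ring.
  apply: (@Kb_core R X L n k.+1 Bootstrap A D x p ((((n - 2)%N)%:R / n%:R) ^+ k.+1)) => //.
  + by rewrite expn_gt0; lia.
  + move=> K ->; rewrite cnt_all /= e1p natrX natrX -exprMn; congr (_ ^+ _).
    by rewrite natrB; [rewrite /a; field | lia].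
  + by rewrite natrX natrX -exprMn mulfVK.
  + rewrite hp /p_nm subr_gt0 -/a.
    have : a ^+ k.+1 <= a by rewrite exprS ger_pMr // exprn_ile1 // ltW.
    lra.
  + rewrite hp /p_nm -/a; have : 0 < a ^+ k.+1 by rewrite exprn_gt0.
    lra.
  + by rewrite e1p; exact: boot_kappa.
  + by apply: (@boot_lam R n k hn p); rewrite hp /p_nm.
-
  have hmn := hsub erefl.
  have hp' : p = m%:R / n%:R by rewrite hp.
  have hq := sub_q R hn hmn.
  have hN0 : (0 < n ^_ m)%N by exact: ffact_pos.
  have hNr : ((n ^_ m)%:R : R) != 0 by rewrite pnatr_eq0 -lt0n.
  have hm0 : 0 < (m%:R : R) by rewrite ltr0n.
  have hmn' : (m%:R : R) + 1 <= n%:R.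
    by rewrite natr1 ler_nat; lia.
  apply: (@Kb_core R X L n m Subbagging A D x p (((n - 2) ^_ m)%:R / (n ^_ m)%:R)) => //.
  + move=> K ->; rewrite cnt_all /= hp' sub_1p //.
  + by rewrite divfK.
  + by rewrite hp' divr_gt0 //; lra.
  + by rewrite hp' ltr_pdivrMr; lra.
  + rewrite hq hp'.
    have -> : (n%:R - m%:R) * (n%:R - m%:R - 1) / (n%:R * (n%:R - 1)) - (1 - m%:R / n%:R) ^+ 2
        = - ((m%:R / n%:R) * (1 - m%:R / n%:R) / (n%:R - 1)) :> R.
      by field; rewrite !gt_eqF //; lra.
    have hn0' : 0 < (n%:R : R) by lra.
    have g1 : 0 <= (m%:R : R) / n%:R by rewrite divr_ge0 // ltW.
    have g2 : 0 <= 1 - (m%:R : R) / n%:R by rewrite subr_ge0 ler_pdivrMr //; lra.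
    have g3 : 0 <= (n%:R : R) - 1 by lra.
    have := divr_ge0 (mulr_ge0 g1 g2) g3; lra.
  + rewrite hq hp'.
    rewrite le_eqVlt; apply/orP; left; apply/eqP; field.
    by rewrite !gt_eqF //; lra.
Qed.

Lemma p_lt1 (R : realType) (s : bag_scheme) (n m : nat) :
  (2 <= n)%N -> (s = Subbagging -> (m <= n - 1)%N) -> p_nm R s n m < 1.
Proof.
move=> hn hsub.
have hnr : 1 < (n%:R : R) by rewrite ltr1n.
case: s hsub => hsub /=.
  have ha : 0 < 1 - (n%:R : R)^-1 by rewrite subr_gt0 invf_lt1 //; lra.
  have := exprn_gt0 m ha; lra.
have hmn := hsub erefl.
rewrite ltr_pdivrMr; last lra.
rewrite mul1r ltr_nat; lia.
Qed.

Unset Implicit Arguments. Set Strict Implicit.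

Theorem theorem1 (R : realType) (X : Type) (L n m : nat) (eps : R)
  (s : bag_scheme) (A : dataset X L -> X -> 'I_L -> R) :
  (2 <= n)%N -> (1 <= m)%N ->
  (s = Subbagging -> (m <= n - 1)%N) ->
  0 < eps ->
  (forall (D : dataset X L) (x : X), in_simplex (A D x)) ->
  selection_stable (fun D x => argmax_eps eps (bagged s A m D x))
    (eps ^- 2 * ((1 - (L%:R)^-1) / (n%:R - 1)) *
       (p_nm R s n m / (1 - p_nm R s n m))) n.
Proof.
move=> hn hm hsub heps hA D hD x.
have hL : (0 < L)%N.
  have [_ hs] := hA D x.
  rewrite lt0n; apply/negP => /eqP h0.
  have : \sum_(i < L) A D x i = 0.
    by apply: big1 => i _; exfalso; have := ltn_ord i; move: (nat_of_ord i); rewrite h0.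
  by rewrite hs; move/eqP; rewrite oner_eq0.
pose j00 : 'I_L := Ordinal hL.
set p := p_nm R s n m.
have hp1 : p < 1 by exact: p_lt1.
have hnr : 1 < (n%:R : R) by rewrite ltr1n.
pose Del (i : 'I_n) := \sum_j (bagged s A m D x j - bagged s A m (remove_at D i) x j) ^+ 2.
set B := [set i : 'I_n | _].
have hbad : forall i, i \in B -> eps ^+ 2 <= Del i.
  move=> i; rewrite inE => /asboolP hi.
  rewrite leNgt; apply/negP => hlt; apply: hi.
  exact: (compat heps j00 hlt).
have hKb := @Kb R X L n m s A D x p hn hm hsub hD hL hA erefl.
have hsumB : #|B|%:R * eps ^+ 2 <= \sum_i Del i.
  have -> : #|B|%:R * eps ^+ 2 = \sum_(i in B) eps ^+ 2 by rewrite sumr_const mulr_natl.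
  apply: le_trans (_ : \sum_(i in B) Del i <= _).
    by apply: ler_sum => i hi; exact: hbad.
  rewrite [X in _ <= X](bigID (fun i => i \in B)) /= lerDl.
  by apply: sumr_ge0 => i _; apply: sumr_ge0 => j _; exact: sqr_ge0.
have hB : #|B|%:R * eps ^+ 2 <= p * (1 - p) * (n%:R / (n%:R - 1)) * (1 - L%:R^-1) / (1 - p) ^+ 2.
  exact: le_trans hsumB hKb.
have he2 : 0 < eps ^+ 2 by rewrite exprn_gt0.
have h1p : 0 < 1 - p by rewrite subr_gt0.
have eB : p * (1 - p) * (n%:R / (n%:R - 1)) * (1 - L%:R^-1) / (1 - p) ^+ 2 =
    (n%:R * (eps ^- 2 * ((1 - L%:R^-1) / (n%:R - 1)) * (p / (1 - p)))) * eps ^+ 2.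
  field; rewrite (gt_eqF h1p) (gt_eqF heps) pnatr_eq0 -lt0n hL /= andbT subr_eq0 gt_eqF //.
rewrite eB in hB.
rewrite (ler_pM2r he2) in hB.
rewrite mulrC ler_pdivrMr; last lra.
by rewrite mulrC.
Qed.
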